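(* Let $\mathbb{F}$ be any field and $n$ a positive integer, and let $M\in\mathbb{F}^{2^n\times2^n}$ be either (i) $M=V_f$ for an arbitrary function $f:\{0,1\}^n\to\mathbb{F}$, or (ii) $M=M_1\otimes M_2\otimes\cdots\otimes M_n$ for arbitrary $M_1,\dots,M_n\in\mathbb{F}^{2\times2}$. Then for every integer $1\le k\le n$, $\mathcal{R}^{rc}_M\big(4\binom{n}{<k}\big)\le\binom{n-k}{\le n-2k}^2$ over $\mathbb{F}$.
   Context: $V_f[x,y]=f(x\vee y)$ for $x,y\in\{0,1\}^n$, with $\vee$ the bitwise OR. Row/column rigidity: $\mathcal{R}^{rc}_A(r)=\min\{\max(\mathrm{nnz_r}(B),\mathrm{nnz_c}(B)):\mathrm{rank}(A+B)\le r\}$, where $\mathrm{nnz_r}$, $\mathrm{nnz_c}$ are the maximum numbers of nonzero entries in a row, resp. column. $\binom{n}{<k}=\sum_{i=0}^{k-1}\binom{n}{i}$, $\binom{m}{\le j}=\sum_{i=0}^{j}\binom{m}{i}$ (empty sum $=0$). *)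

(* Defs.v *)
From Stdlib Require Import ClassicalDescription.
From mathcomp Require Import all_boot all_order all_algebra.
Set Implicit Arguments. Unset Strict Implicit. Unset Printing Implicit Defensive.
Import GRing.Theory.
Local Open Scope ring_scope.

(* Index i : 'I_(2^n) encodes x in {0,1}^n by its binary digits:
   coordinate t of x is bit t of i (t = 0 least significant). *)
Definition bitsOf (n : nat) (i : 'I_(2 ^ n)) : {ffun 'I_n -> bool} :=
  [ffun t : 'I_n => odd (i %/ 2 ^ t)].

Definition Vf (F : Type) (n : nat) (f : {ffun 'I_n -> bool} -> F) : 'M[F]_(2 ^ n) :=
  \matrix_(i, j) f [ffun t => bitsOf i t || bitsOf j t].

Definition bitI (b : bool) : 'I_2 := @Ordinal 2 (nat_of_bool b) (leq_b1 b).

(* Kronecker product M_0 (x) M_1 (x) ... (x) M_(n-1), standard convention: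
   factor M_t acts on binary digit n-1-t (M_0 on the most significant digit). *)
Definition kronProd (F : nzRingType) (n : nat) (Ms : 'I_n -> 'M[F]_2) : 'M[F]_(2 ^ n) :=
  \matrix_(i, j) \prod_(t < n)
     Ms t (bitI (odd (i %/ 2 ^ (n.-1 - t)))) (bitI (odd (j %/ 2 ^ (n.-1 - t)))).

Definition nnz_r (F : nzRingType) (m p : nat) (B : 'M[F]_(m, p)) : nat :=
  (\max_(i < m) #|[set j : 'I_p | B i j != 0%R]|)%N.
Definition nnz_c (F : nzRingType) (m p : nat) (B : 'M[F]_(m, p)) : nat :=
  (\max_(j < p) #|[set i : 'I_m | B i j != 0%R]|)%N.

Definition rigid_pred (F : fieldType) (m p : nat) (A : 'M[F]_(m, p)) (r s : nat) : Prop :=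
  exists B : 'M[F]_(m, p), (\rank ((A + B)%R) <= r)%N /\ (maxn (nnz_r B) (nnz_c B) <= s)%N.

Definition rigid_predb (F : fieldType) (m p : nat) (A : 'M[F]_(m, p)) (r s : nat) : bool :=
  if excluded_middle_informative (rigid_pred A r s) then true else false.

Lemma rigid_pred_ex (F : fieldType) (m p : nat) (A : 'M[F]_(m, p)) (r : nat) :
  exists s, rigid_predb A r s.
Proof.
exists (maxn (nnz_r (- A)) (nnz_c (- A))).
rewrite /rigid_predb; case: excluded_middle_informative => // H; exfalso; apply: H.
exists (- A); split; last by []. rewrite addrN mxrank0; exact: leq0n.
Qed.

(* row/column rigidity R^{rc}_A(r) = min { max(nnz_r B, nnz_c B) : rank(A+B) <= r } *)
Definition rc_rigidity (F : fieldType) (m p : nat) (A : 'M[F]_(m, p)) (r : nat) : nat :=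
  ex_minn (rigid_pred_ex A r).

Definition binom_lt (n k : nat) : nat := (\sum_(i < k) 'C(n, i))%N.
(* binom(m, <= j) = sum_{i=0}^{j} C(m,i), j an integer; empty sum (= 0) if j < 0 *)
Definition binom_le (m : nat) (j : int) : nat :=
  match j with Posz j' => (\sum_(i < j'.+1) 'C(m, i))%N | Negz _ => 0%N end.

(* Main.v *)
Require Import Defs.
From Stdlib Require Import ClassicalDescription.
From mathcomp Require Import all_boot all_order all_algebra zify ring.
Set Implicit Arguments. Unset Strict Implicit. Unset Printing Implicit Defensive.
Import GRing.Theory.

Section S_H1.

Lemma card_split_lt (T : finType) (P : pred T) (f : T -> nat) k :
  #|[set X | P X && (f X < k)]| = \sum_(i < k) #|[set X | P X && (f X == i)]|.
Proof.
elim: k => [|k IH].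
  by rewrite big_ord0; apply: eq_card0 => X; rewrite inE ltn0 andbF.
rewrite big_ord_recr /= -IH.
have -> : [set X | P X && (f X < k.+1)] =
   [set X | P X && (f X < k)] :|: [set X | P X && (f X == k)].
  by apply/setP => X; rewrite !inE ltnS leq_eqVlt; case: (P X); case: ltngtP.
rewrite cardsU.
have -> : [set X | P X && (f X < k)] :&: [set X | P X && (f X == k)] = set0.
  apply/setP => X; rewrite !inE; case: (P X) => //=; case: ltngtP => //.
by rewrite cards0 subn0.
Qed.

Lemma card_inj_le (A B : finType) (f : A -> B) (P : pred B) :
  injective f -> #|[set a | P (f a)]| <= #|[set b | P b]|.
Proof.
move=> inj; rewrite -(card_imset _ inj); apply: subset_leq_card.
by apply/subsetP => b /imsetP [a]; rewrite !inE => Pa ->.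
Qed.

Lemma card_small_sets n k : #|[set X : {set 'I_n} | #|X| < k]| = binom_lt n k.
Proof.
rewrite /binom_lt.
have -> : [set X : {set 'I_n} | #|X| < k] = [set X : {set 'I_n} | predT X && (#|X| < k)] by [].
rewrite (card_split_lt predT (fun X : {set 'I_n} => #|X|)).
apply: eq_bigr => i _; rewrite -[n in 'C(n, _)]card_ord -card_draws; apply: eq_card => X; rewrite !inE.
done.
Qed.

End S_H1.
Section S_H2.

Lemma count_core n k (X : {set 'I_n}) : k <= #|X| -> k <= n ->
 #|[set Y : {set 'I_n} | (k <= #|Y|) && (k <= #|~: (X :|: Y)|)]|
   <= (binom_le (n - k) (n%:Z - (2 * k)%N%:Z)) ^ 2.
Proof.
move=> kX kn.
have cU : forall Y : {set 'I_n}, #|X :|: Y| + #|~: (X :|: Y)| = n.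
  by move=> Y; rewrite cardsC card_ord.
have XU : forall Y : {set 'I_n}, #|X| <= #|X :|: Y|.
  by move=> Y; apply: subset_leq_card; apply: subsetUl.
case: (leqP (2 * k) n) => h2k; last first.
  suff -> : [set Y : {set 'I_n} | (k <= #|Y|) && (k <= #|~: (X :|: Y)|)] = set0
    by rewrite cards0.
  apply/setP => Y; rewrite !inE.
  apply/negP => /andP [_ h]; have := cU Y; have := XU Y; lia.
rewrite subzn //=.
have : 0 < #|[set A : {set 'I_n} | A \subset X & (#|A| == k)]| by rewrite cards_draws bin_gt0.
case/card_gt0P => K; rewrite inE => /andP [sKX /eqP cK].
pose SA := [set A : {set 'I_n} | (A \subset ~: K) && (#|A| < (n - 2 * k).+1)].
pose SD := [set D : {set 'I_n} | (D \subset K) && (#|D| < (n - 2 * k).+1)].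
pose phi := fun Y : {set 'I_n} => (Y :\: K, K :\: Y).
have phi_inj : injective phi.
  move=> Y1 Y2 [e1 e2]; apply/setP => y.
  have f1 : y \in Y1 :\: K = (y \in Y2 :\: K) by rewrite e1.
  have f2 : y \in K :\: Y1 = (y \in K :\: Y2) by rewrite e2.
  move: f1 f2; rewrite !inE; case: (y \in K); case: (y \in Y1); case: (y \in Y2) => //=.
apply: (@leq_trans #|setX SA SD|).
  rewrite -(card_imset _ phi_inj); apply: subset_leq_card.
  apply/subsetP => p /imsetP [Y]; rewrite inE => /andP [hY1 hY2] ->.
  have e1 : #|K :|: Y| = #|K| + #|Y :\: K|.
    rewrite -(cardsID K (K :|: Y)); congr (_ + _).
      by apply: eq_card => y; rewrite !inE; case: (y \in K); case: (y \in Y).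
    by apply: eq_card => y; rewrite !inE; case: (y \in K); case: (y \in Y).
  have e2 : #|K :|: Y| <= #|X :|: Y| by apply: subset_leq_card; apply: setSU.
  have e3 := cardsID K Y. have e4 := cardsID Y K.
  have e5 : #|Y :&: K| = #|K :&: Y| by rewrite setIC.
  have e6 := cU Y.
  rewrite !inE /=; apply/andP; split; apply/andP; split.
  - by apply/subsetP => y; rewrite !inE => /andP [].
  - move: hY1 hY2 e1 e2 e3 e4 e5 e6 cK. set a := #|K :|: Y|; set b := #|Y :\: K|; set c := #|X :|: Y|; set d := #|~: (X :|: Y)|; set e := #|Y|; set f := #|K|; set g := #|Y :&: K|; set h := #|K :&: Y|; set i := #|K :\: Y|. lia.
  - by apply/subsetP => y; rewrite !inE => /andP [].
  - move: hY1 hY2 e1 e2 e3 e4 e5 e6 cK. set a := #|K :|: Y|; set b := #|Y :\: K|; set c := #|X :|: Y|; set d := #|~: (X :|: Y)|; set e := #|Y|; set f := #|K|; set g := #|Y :&: K|; set h := #|K :&: Y|; set i := #|K :\: Y|. lia.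
rewrite cardsX -mulnn; apply: leq_mul.
  have -> : SA = [set A : {set 'I_n} | (fun A => A \subset ~: K) A && (#|A| < (n - 2 * k).+1)] by [].
  rewrite (card_split_lt (fun A : {set 'I_n} => A \subset ~: K) (fun A : {set 'I_n} => #|A|)).
  apply: leq_sum => i _.
  have cKc : #|~: K| = n - k by have := cardsC K; rewrite card_ord cK; lia.
  rewrite -cKc -cards_draws; apply: eq_leq; apply: eq_card => A; rewrite !inE.
  by [].
have -> : SD = [set A : {set 'I_n} | (fun A => A \subset K) A && (#|A| < (n - 2 * k).+1)] by [].
rewrite (card_split_lt (fun A : {set 'I_n} => A \subset K) (fun A : {set 'I_n} => #|A|)).
apply: leq_sum => i _.
apply: (@leq_trans 'C(k, i)).
  rewrite -[k in 'C(k, _)]cK -cards_draws; apply: eq_leq; apply: eq_card => A; rewrite !inE.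
  by [].
apply: leq_bin2l; lia.
Qed.

End S_H2.
Section S_H3.
Local Open Scope ring_scope.

Lemma rank1_mx (F : fieldType) m p (a : 'I_m -> F) (b : 'I_p -> F) :
  (\rank ((\matrix_(i < m, j < p) (a i * b j)%R : 'M[F]_(m, p))) <= 1)%N.
Proof.
have -> : (\matrix_(i < m, j < p) (a i * b j)%R : 'M[F]_(m, p)) = (\col_i a i) *m (\row_j b j).
  by apply/matrixP => i j; rewrite !mxE big_ord1 !mxE.
by apply: leq_trans (mxrankM_maxl _ _) (rank_leq_col _).
Qed.

Lemma rank_sum_le (F : fieldType) m p (I : finType) (P : pred I) (A : I -> 'M[F]_(m, p)) :
  (forall i, P i -> \rank (A i) <= 1)%N ->
  (\rank (\sum_(i | P i) A i)%R <= #|P|)%N.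
Proof.
move=> h; rewrite -sum1_card.
apply: (big_ind2 (fun (X : 'M[F]_(m, p)) (n : nat) => \rank X <= n)%N).
- by rewrite mxrank0.
- by move=> X1 n1 X2 n2 h1 h2; apply: leq_trans (mxrank_add _ _) (leq_add h1 h2).
- by move=> i Pi; apply: h.
Qed.

Lemma sum_pick (F : fieldType) (I : finType) (P : pred I) (i : I) (f : I -> F) :
  \sum_(i0 | P i0) ((i == i0)%:R * f i0) = if P i then f i else 0.
Proof.
case: (boolP (P i)) => Pi.
  rewrite (bigD1 i) //= eqxx mul1r big1 ?addr0 // => i0 /andP [_ ne].
  by rewrite eq_sym (negbTE ne) mul0r.
rewrite big1 // => i0 Pi0; case: eqP => [e|_]; last by rewrite mul0r.
by rewrite e Pi0 in Pi.
Qed.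

Lemma sum_pick_r (F : fieldType) (I : finType) (P : pred I) (i : I) (f : I -> F) :
  \sum_(i0 | P i0) (f i0 * (i == i0)%:R) = if P i then f i else 0.
Proof. rewrite -(sum_pick P i f); apply: eq_bigr => i0 _; exact: mulrC. Qed.

Lemma split_rc (F : fieldType) N (R : 'M[F]_N) (p q : pred 'I_N) :
  R + (\matrix_(i, j) (if p i && q j then - R i j else 0) : 'M[F]_N) =
  \sum_(i0 | ~~ p i0) (\matrix_(i, j) ((i == i0)%:R * R i0 j) : 'M[F]_N) +
  \sum_(j0 | ~~ q j0) (\matrix_(i, j) ((if p i then R i j0 else 0) * (j == j0)%:R) : 'M[F]_N).
Proof.
apply/matrixP => i j; rewrite !mxE !summxE.
under eq_bigr do rewrite mxE.
under [X in _ = _ + X]eq_bigr do rewrite mxE.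
rewrite sum_pick.
rewrite (sum_pick_r (fun j0 => ~~ q j0) j (fun j0 => if p i then R i j0 else 0)).
by case: (p i); case: (q j) => /=; rewrite ?addrN ?addr0 ?add0r.
Qed.

End S_H3.
Section S_H4.
Local Open Scope ring_scope.

Lemma general (F : fieldType) (n k : nat) (M : 'M[F]_(2 ^ n))
  (bb : 'I_(2 ^ n) -> {ffun 'I_n -> bool}) (eps del : 'I_n -> bool)
  (g h : {ffun 'I_n -> bool} -> 'I_(2 ^ n) -> F) :
  injective bb ->
  (forall S i t, g S i != 0 -> S t -> bb i t = eps t) ->
  (forall S j t, h S j != 0 -> S t -> bb j t = del t) ->
  (forall i j, M i j = \sum_S g S i * h S j) ->
  (1 <= k <= n)%N ->
  (rc_rigidity M (4 * binom_lt n k) <=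
       (binom_le (n - k) (n%:Z - (2 * k)%N%:Z)) ^ 2)%N.
Proof.
move=> bbI Hg Hh HM /andP [k1 kn].
set s := (binom_le _ _ ^ 2)%N.
suff P : rigid_pred M (4 * binom_lt n k) s.
  rewrite /rc_rigidity; case: ex_minnP => m _ hm; apply: hm.
  by rewrite /rigid_predb; case: excluded_middle_informative.
pose wt := fun S : {ffun 'I_n -> bool} => #|[set t | S t]|.
pose T := fun S => (\matrix_(i < 2 ^ n, j < 2 ^ n) (g S i * h S j) : 'M[F]_(2 ^ n)).
pose L := \sum_(S | (wt S < k)%N) T S.
pose R := \sum_(S | ~~ (wt S < k)%N) T S.
pose X := fun i => [set t | bb i t != eps t].
pose Y := fun j => [set t | bb j t != del t].
pose B := (\matrix_(i, j) (if (k <= #|X i|)%N && (k <= #|Y j|)%N then - R i j else 0)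
           : 'M[F]_(2 ^ n)).
have ML : M = L + R.
  apply/matrixP => i j; rewrite HM !mxE !summxE (bigID (fun S => (wt S < k)%N)) /=.
  by congr (_ + _); apply: eq_bigr => S _; rewrite mxE.
have key : forall i j, B i j != 0 ->
    [/\ (k <= #|X i|)%N, (k <= #|Y j|)%N & (k <= #|~: (X i :|: Y j)|)%N].
  move=> i j; rewrite mxE; case: ifP => [/andP [h1 h2]|]; last by rewrite eqxx.
  rewrite oppr_eq0 summxE => nz; split => //.
  case: (leqP k #|~: (X i :|: Y j)|) => // hlt.
  move: nz; rewrite big1 ?eqxx // => S hS; rewrite mxE.
  case: (boolP (g S i == 0)) => [/eqP -> |gn]; first by rewrite mul0r.
  case: (boolP (h S j == 0)) => [/eqP -> |hn]; first by rewrite mulr0.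
  exfalso; move: hS; rewrite -leqNgt => hS.
  have : ([set t | S t] \subset ~: (X i :|: Y j)).
    apply/subsetP => t; rewrite !inE => St.
    by rewrite (Hg _ _ _ gn St) (Hh _ _ _ hn St) !eqxx.
  move/subset_leq_card => hc; have := leq_ltn_trans (leq_trans hS hc) hlt; by rewrite ltnn.
have Xinj : injective X.
  move=> i1 i2 e; apply: bbI; apply/ffunP => t.
  have : (t \in X i1) = (t \in X i2) by rewrite e.
  by rewrite !inE; case: (bb i1 t); case: (bb i2 t); case: (eps t).
have Yinj : injective Y.
  move=> i1 i2 e; apply: bbI; apply/ffunP => t.
  have : (t \in Y i1) = (t \in Y i2) by rewrite e.
  by rewrite !inE; case: (bb i1 t); case: (bb i2 t); case: (del t).
have Sinj : injective (fun S : {ffun 'I_n -> bool} => [set t | S t]).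
  move=> S1 S2 e; apply/ffunP => t.
  have : (t \in [set t | S1 t]) = (t \in [set t | S2 t]) by rewrite e.
  by rewrite !inE.
have cX : (#|[pred i0 | ~~ (k <= #|X i0|)%N]| <= binom_lt n k)%N.
  rewrite -card_small_sets; apply: leq_trans (card_inj_le (fun Z : {set 'I_n} => (#|Z| < k)%N) Xinj).
  by apply: eq_leq; apply: eq_card => i; rewrite !inE ltnNge.
have cY : (#|[pred i0 | ~~ (k <= #|Y i0|)%N]| <= binom_lt n k)%N.
  rewrite -card_small_sets; apply: leq_trans (card_inj_le (fun Z : {set 'I_n} => (#|Z| < k)%N) Yinj).
  by apply: eq_leq; apply: eq_card => i; rewrite !inE ltnNge.
have cS : (#|[pred S | (wt S < k)%N]| <= binom_lt n k)%N.
  rewrite -card_small_sets; apply: leq_trans (card_inj_le (fun Z : {set 'I_n} => (#|Z| < k)%N) Sinj).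
  by apply: eq_leq; apply: eq_card => i; rewrite !inE.
exists B; split.
  rewrite ML -addrA split_rc.
  apply: leq_trans (mxrank_add _ _) _.
  apply: (@leq_trans (binom_lt n k + (binom_lt n k + binom_lt n k))); last by lia.
  apply: leq_add.
    apply: leq_trans (rank_sum_le _) cS => S _; exact: rank1_mx.
  apply: leq_trans (mxrank_add _ _) _; apply: leq_add.
    apply: leq_trans (rank_sum_le _) cX => i0 _.
    exact: (rank1_mx (fun i => (i == i0)%:R) (fun j => R i0 j)).
  apply: leq_trans (rank_sum_le _) cY => j0 _.
  exact: (rank1_mx (fun i => if (k <= #|X i|)%N then R i j0 else 0) (fun j => (j == j0)%:R)).
rewrite geq_max; apply/andP; split.
  apply/bigmax_leqP => i _.
  case: (boolP (k <= #|X i|)%N) => hXi; last first.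
    apply: (@leq_trans 0%N) => //; rewrite leqn0 cards_eq0; apply/eqP/setP => j; rewrite !inE.
    by case: (boolP (B i j != 0)) => // /(key i j) [h1 _ _]; rewrite h1 in hXi.
  apply: leq_trans (count_core hXi kn).
  apply: leq_trans (card_inj_le (fun Z : {set 'I_n} => (k <= #|Z|)%N && (k <= #|~: (X i :|: Z)|)%N) Yinj).
  apply: subset_leq_card; apply/subsetP => j; rewrite !inE => /(key i j) [_ h2 h3].
  by rewrite h2 h3.
apply/bigmax_leqP => j _.
case: (boolP (k <= #|Y j|)%N) => hYj; last first.
  apply: (@leq_trans 0%N) => //; rewrite leqn0 cards_eq0; apply/eqP/setP => i; rewrite !inE.
  by case: (boolP (B i j != 0)) => // /(key i j) [_ h1 _]; rewrite h1 in hYj.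
apply: leq_trans (count_core hYj kn).
apply: leq_trans (card_inj_le (fun Z : {set 'I_n} => (k <= #|Z|)%N && (k <= #|~: (Y j :|: Z)|)%N) Xinj).
apply: subset_leq_card; apply/subsetP => i; rewrite !inE => /(key i j) [h1 _ h3].
by rewrite h1 setUC h3.
Qed.

End S_H4.
Section S_H5.

Lemma bits_nat_inj n : forall a b, (a < 2 ^ n)%N -> (b < 2 ^ n)%N ->
  (forall t, (t < n)%N -> odd (a %/ 2 ^ t) = odd (b %/ 2 ^ t)) -> a = b.
Proof.
elim: n => [|n IH] a b ha hb h.
  by move: ha hb {h}; rewrite expn0; case: a; case: b.
have e0 := h 0%N (ltn0Sn _); rewrite expn0 !divn1 in e0.
have hd : a %/ 2 = b %/ 2.
  apply: IH.
  - by rewrite ltn_divLR // -expnSr.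
  - by rewrite ltn_divLR // -expnSr.
  move=> t ht; have := h t.+1 ht; by rewrite expnS !divnMA.
by rewrite (divn_eq a 2) (divn_eq b 2) hd !modn2 e0.
Qed.

Lemma bitsOf_inj n : injective (@bitsOf n).
Proof.
move=> i j e; apply: val_inj; apply: (@bits_nat_inj n _ _ (ltn_ord i) (ltn_ord j)) => t ht.
have := congr1 (fun v : {ffun 'I_n -> bool} => v (Ordinal ht)) e.
by rewrite /= !ffunE.
Qed.

Definition kbits n (i : 'I_(2 ^ n)) : {ffun 'I_n -> bool} :=
  [ffun t : 'I_n => odd (i %/ 2 ^ (n.-1 - t))].

Lemma kbits_inj n : injective (@kbits n).
Proof.
move=> i j e; apply: val_inj; apply: (@bits_nat_inj n _ _ (ltn_ord i) (ltn_ord j)) => t ht.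
have ht' : (n.-1 - t < n)%N by move: ht; case: n {i j e} => //= n _; rewrite ltnS leq_subr.
have := congr1 (fun v : {ffun 'I_n -> bool} => v (Ordinal ht')) e.
rewrite /= !ffunE subKn //; by move: ht; case: n {i j e ht'}.
Qed.

Local Open Scope ring_scope.

Lemma prod_expand (R : comNzRingType) n (G H : 'I_n -> bool -> R) :
  \prod_(t < n) (G t false * H t false + G t true * H t true) =
  \sum_(S : {ffun 'I_n -> bool}) ((\prod_(t < n) G t (S t)) * (\prod_(t < n) H t (S t))).
Proof.
have -> : \prod_(t < n) (G t false * H t false + G t true * H t true) =
          \prod_(t < n) \sum_(b : bool) (G t b * H t b).
  by apply: eq_bigr => t _; rewrite big_bool addrC.
rewrite bigA_distr_bigA; apply: eq_bigr => S _; by rewrite big_split.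
Qed.

End S_H5.
Section S_H6.
Local Open Scope ring_scope.

Lemma delta_expand (F : fieldType) n (f : {ffun 'I_n -> bool} -> F) z :
  f z = \sum_w f w * \prod_(t < n) ((z t == w t)%:R : F).
Proof.
rewrite (bigD1 z) //= big1 ?mulr1.
  rewrite big1 ?addr0 // => w ne.
  have : ~~ [forall t, z t == w t].
    apply: contra ne => /forallP hh; apply/eqP/ffunP => t; apply/esym/eqP/hh.
  rewrite negb_forall => /existsP [t ht].
  by rewrite (bigD1 t) //= (negbTE ht) mul0r mulr0.
by move=> t _; rewrite eqxx.
Qed.

Lemma prod_zero (F : fieldType) n (G : 'I_n -> F) t : G t = 0 -> \prod_(t0 < n) G t0 = 0.
Proof. by move=> h; rewrite (bigD1 t) //= h mul0r. Qed.

Lemma case_Vf (F : fieldType) n (f : {ffun 'I_n -> bool} -> F) k :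
  (1 <= k <= n)%N ->
  (rc_rigidity (Vf f) (4 * binom_lt n k) <=
       (binom_le (n - k) (n%:Z - (2 * k)%N%:Z)) ^ 2)%N.
Proof.
pose u := fun (b x : bool) => (if b && x then 0 else 1 : F).
pose c := fun (w : {ffun 'I_n -> bool}) t (b : bool) =>
  (if b then (if w t then -1 else 1) else (if w t then 1 else 0) : F).
pose g := fun (S : {ffun 'I_n -> bool}) (i : 'I_(2 ^ n)) =>
  (\sum_w f w * \prod_(t < n) c w t (S t)) * \prod_(t < n) u (S t) (bitsOf i t).
pose h := fun (S : {ffun 'I_n -> bool}) (j : 'I_(2 ^ n)) =>
  \prod_(t < n) u (S t) (bitsOf j t).
apply: (@general F n k (Vf f) (@bitsOf n) (fun _ => false) (fun _ => false) g h).
- exact: bitsOf_inj.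
- move=> S i t nz St; case Eb: (bitsOf i t) => //; move: nz; rewrite /g.
  rewrite (@prod_zero F n _ t); [by rewrite mulr0 eqxx | by rewrite /u St Eb].
- move=> S i t nz St; case Eb: (bitsOf i t) => //; move: nz; rewrite /h.
  rewrite (@prod_zero F n _ t); [by rewrite eqxx | by rewrite /u St Eb].
move=> i j; rewrite mxE delta_expand.
have E : forall w : {ffun 'I_n -> bool}, \prod_(t < n) (([ffun t => bitsOf i t || bitsOf j t] t == w t)%:R : F) =
   \sum_(S : {ffun 'I_n -> bool}) ((\prod_(t < n) (c w t (S t) * u (S t) (bitsOf i t))) * \prod_(t < n) u (S t) (bitsOf j t)).
  move=> w; rewrite -(prod_expand (fun t b => c w t b * u b (bitsOf i t)) (fun t b => u b (bitsOf j t))); apply: eq_bigr => t _; rewrite ffunE /c /u.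
  by case: (w t); case: (bitsOf i t); case: (bitsOf j t); rewrite /= ?mulr1 ?mulr0 ?addr0 ?add0r ?mul1r ?mulN1r ?subrr.
under eq_bigr do rewrite E mulr_sumr.
rewrite exchange_big /=; apply: eq_bigr => S _.
rewrite /g /h mulr_suml mulr_suml; apply: eq_bigr => w _.
by rewrite big_split /= !mulrA.
Qed.

End S_H6.
Section S_H7.
Local Open Scope ring_scope.

Section Dec.
Variable F : fieldType.
Variable m : 'M[F]_2.
Let A := m (bitI false) (bitI false).
Let Bq := m (bitI false) (bitI true).
Let C := m (bitI true) (bitI false).
Let D := m (bitI true) (bitI true).
Definition dr (x : bool) : F :=
  if D != 0 then (if x then 1 else Bq / D)
  else if A != 0 then (if x then C / A else 1)
  else (if x then 0 else 1).
Definition ds (y : bool) : F :=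
  if D != 0 then (if y then D else C)
  else if A != 0 then (if y then Bq else A)
  else (if y then Bq else 0).
Definition dbeta : F :=
  if D != 0 then A - Bq * C / D
  else if A != 0 then - (C * Bq / A)
  else C.
Definition de : bool := if D != 0 then false else true.
Definition dd : bool := if D != 0 then false else if A != 0 then true else false.

Lemma dec_ok x y : m (bitI x) (bitI y) =
  dr x * ds y + (if (x == de) && (y == dd) then dbeta else 0).
Proof.
rewrite /dr /ds /dbeta /de /dd.
case: (boolP (D != 0)) => hD.
  by case: x; case: y => /=; rewrite ?addr0 -/A -/Bq -/C -/D; field.
move: hD; rewrite negbK => /eqP hD.
case: (boolP (A != 0)) => hA.
  by case: x; case: y => /=; rewrite ?addr0 -/A -/Bq -/C -/D ?hD; field.
move: hA; rewrite negbK => /eqP hA.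
by case: x; case: y => /=; rewrite ?addr0 -/A -/Bq -/C -/D ?hD ?hA; ring.
Qed.
End Dec.

Lemma case_kron (F : fieldType) n (Ms : 'I_n -> 'M[F]_2) k :
  (1 <= k <= n)%N ->
  (rc_rigidity (kronProd Ms) (4 * binom_lt n k) <=
       (binom_le (n - k) (n%:Z - (2 * k)%N%:Z)) ^ 2)%N.
Proof.
pose G := fun t (b x : bool) => if b then dbeta (Ms t) * ((x == de (Ms t))%:R : F) else dr (Ms t) x.
pose H := fun t (b y : bool) => if b then ((y == dd (Ms t))%:R : F) else ds (Ms t) y.
pose g := fun (S : {ffun 'I_n -> bool}) (i : 'I_(2 ^ n)) => \prod_(t < n) G t (S t) (kbits i t).
pose h := fun (S : {ffun 'I_n -> bool}) (j : 'I_(2 ^ n)) => \prod_(t < n) H t (S t) (kbits j t).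
apply: (@general F n k (kronProd Ms) (@kbits n) (fun t => de (Ms t)) (fun t => dd (Ms t)) g h).
- exact: kbits_inj.
- move=> S i t nz St; apply/eqP; apply: contraNT nz => ne; apply/eqP.
  by apply: (@prod_zero F n _ t); rewrite /G St (negbTE ne) mulr0.
- move=> S i t nz St; apply/eqP; apply: contraNT nz => ne; apply/eqP.
  by apply: (@prod_zero F n _ t); rewrite /H St (negbTE ne).
move=> i j; rewrite mxE.
rewrite -(prod_expand (fun t b => G t b (kbits i t)) (fun t b => H t b (kbits j t))).
apply: eq_bigr => t _; rewrite dec_ok /G /H /kbits !ffunE.
case: ((odd (i %/ 2 ^ (n.-1 - t)) == de (Ms t))); case: (odd (j %/ 2 ^ (n.-1 - t)) == dd (Ms t));
  by rewrite /= ?mulr1 ?mulr0.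
Qed.

End S_H7.
Local Open Scope ring_scope.

Theorem mainTheorem13 (F : fieldType) (n : nat) (M : 'M[F]_(2 ^ n)) :
  (0 < n)%N ->
  ((exists f : {ffun 'I_n -> bool} -> F, M = Vf f) \/
   (exists Ms : 'I_n -> 'M[F]_2, M = kronProd Ms)) ->
  forall k : nat, (1 <= k <= n)%N ->
    (rc_rigidity M (4 * binom_lt n k) <=
       (binom_le (n - k) (n%:Z - (2 * k)%N%:Z)) ^ 2)%N.
Proof.
move=> _ [[f ->] | [Ms ->]] k hk; [exact: case_Vf | exact: case_kron].
Qed.
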